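(* Let $N=\{1,\dots,n\}$ and $u:X\to\mathbb{R}$ non-constant affine. Suppose that for each $i\in N$, $\succ_i$ is a Bewley preference on $\mathcal{F}$ with unique representation $(u,C_i)$, and that $\succ_0$ is either a hope-and-prepare preference with unique representation $(u,C_0,C_0)$ or a Bewley preference with unique representation $(u,C_0)$. Then: (i) Pareto (for all $f,g\in\mathcal{F}$, if $f\succ_i g$ for all $i\in N$ then $f\succ_0 g$) holds if and only if $C_0\subseteq\mathrm{co}\left(\bigcup_{i=1}^nC_i\right)$; (ii) Caution for incomparability (for all $f\in\mathcal{F}$, $x\in X$, if there is $i\in N$ with $f\Join_i x$ then $f\Join_0 x$) holds if and only if $\mathrm{co}\left(\bigcup_{i=1}^nC_i\right)\subseteq C_0$. In particular, when both conditions hold, $C_0=\mathrm{co}\left(\bigcup_{i=1}^nC_i\right)$.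
   Context: $S$ is a set of states with algebra $\Sigma$; $X$ is a non-singleton convex subset of a real vector space; $\mathcal{F}$ is the set of simple acts $f:S\to X$; elements of $X$ are identified with constant acts; $\Delta$ is the set of finitely additive probability measures on $(S,\Sigma)$ with weak* topology; $\mathrm{co}(P)$ denotes the convex hull of $P\subseteq\Delta$. A Bewley preference with representation $(u,C)$ ($C\subseteq\Delta$ non-empty convex compact): $f\succ g$ iff $\int u(f)dp>\int u(g)dp$ for all $p\in C$. A hope-and-prepare preference with representation $(u,C,D)$ ($C,D$ convex compact, $C\cap D\ne\emptyset$): $f\succ g$ iff $\min_{p\in C}\int u(f)dp>\min_{p\in C}\int u(g)dp$ and $\max_{p\in D}\int u(f)dp>\max_{p\in D}\int u(g)dp$. Unique representation: sets unique, $u$ unique up to positive affine transformation. $f\Join_i x$ means $f\not\succ_i x$ and $x\not\succ_i f$. *)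

(* Defs.v *)
From HB Require Import structures.
From mathcomp Require Import all_boot all_order all_algebra.
From mathcomp Require Import all_classical all_reals all_analysis.
Set Implicit Arguments. Unset Strict Implicit. Unset Printing Implicit Defensive.
Import Order.TTheory GRing.Theory Num.Theory.
Import numFieldNormedType.Exports.
Local Open Scope classical_set_scope.
Local Open Scope ring_scope.

Section Defs.
Variables (R : realType) (S : Type) (V : lmodType R).

Definition is_algebra (Sig : set (set S)) : Prop :=
  Sig setT /\ (forall A, Sig A -> Sig (~` A)) /\
  (forall A B, Sig A -> Sig B -> Sig (A `|` B)).

Definition convex_X (X : set V) : Prop :=
  forall x y (a : R), X x -> X y -> 0 <= a <= 1 -> X (a *: x + (1 - a) *: y).

Definition non_singleton (X : set V) : Prop :=
  exists x y, X x /\ X y /\ x <> y.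

Definition is_act (Sig : set (set S)) (X : set V) (f : S -> V) : Prop :=
  (forall s, X (f s)) /\ finite_set (range f) /\
  (forall x, Sig (f @^-1` [set x])).

Definition affine_on (X : set V) (u : V -> R) : Prop :=
  forall x y (a : R), X x -> X y -> 0 <= a <= 1 ->
    u (a *: x + (1 - a) *: y) = a * u x + (1 - a) * u y.

Definition nonconstant_on (X : set V) (u : V -> R) : Prop :=
  exists x y, X x /\ X y /\ u x <> u y.

(* finitely additive probability measures on (S, Sig); by convention
   p A = 0 for A outside Sig, so that a measure is determined by its
   values on Sig *)
Definition fa_prob (Sig : set (set S)) (p : set S -> R) : Prop :=
  (forall A, ~ Sig A -> p A = 0) /\
  (forall A, Sig A -> 0 <= p A) /\ p setT = 1 /\
  (forall A B, Sig A -> Sig B -> A `&` B = set0 -> p (A `|` B) = p A + p B).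

Definition expect (u : V -> R) (f : S -> V) (p : set S -> R) : R :=
  (\sum_(x \in range f) (u x * p (f @^-1` [set x])))%R.

Definition convex_meas (P : set (set S -> R)) : Prop :=
  forall p q (a : R), P p -> P q -> 0 <= a <= 1 ->
    P (fun A => a * p A + (1 - a) * q A).

Definition co (P : set (set S -> R)) : set (set S -> R) :=
  [set q | exists (m : nat) (w : 'I_m -> R) (ps : 'I_m -> set S -> R),
     (forall i, 0 <= w i) /\ (\sum_(i < m) w i = 1) /\ (forall i, P (ps i)) /\
     q = (fun A => \sum_(i < m) w i * ps i A)].

(* weak* topology on Delta = setwise convergence on events (given the
   convention p A = 0 outside Sig): the pointwise topology on set S -> R *)
Definition wstar_compact (P : set (set S -> R)) : Prop :=
  @compact {ptws set S -> R} P.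

Definition prior_set (Sig : set (set S)) (C : set (set S -> R)) : Prop :=
  C `<=` fa_prob Sig /\ convex_meas C /\ wstar_compact C.

Definition pref := (S -> V) -> (S -> V) -> Prop.

Definition bewley_rep (Sig : set (set S)) (X : set V) (P : pref)
    (u : V -> R) (C : set (set S -> R)) : Prop :=
  affine_on X u /\ prior_set Sig C /\ C !=set0 /\
  forall f g, is_act Sig X f -> is_act Sig X g ->
    (P f g <-> forall p, C p -> expect u f p > expect u g p).

Definition minE (u : V -> R) (C : set (set S -> R)) (f : S -> V) : R :=
  inf [set expect u f p | p in C].
Definition maxE (u : V -> R) (D : set (set S -> R)) (f : S -> V) : R :=
  sup [set expect u f p | p in D].

Definition hp_rep (Sig : set (set S)) (X : set V) (P : pref)
    (u : V -> R) (C D : set (set S -> R)) : Prop :=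
  affine_on X u /\ prior_set Sig C /\ prior_set Sig D /\ (C `&` D) !=set0 /\
  forall f g, is_act Sig X f -> is_act Sig X g ->
    (P f g <-> minE u C f > minE u C g /\ maxE u D f > maxE u D g).

Definition pos_affine_equiv (X : set V) (u u' : V -> R) : Prop :=
  exists a b : R, 0 < a /\ forall x, X x -> u' x = a * u x + b.

Definition unique_bewley Sig X (P : pref) u C : Prop :=
  bewley_rep Sig X P u C /\
  forall u' C', bewley_rep Sig X P u' C' -> C' = C /\ pos_affine_equiv X u u'.

Definition unique_hp Sig X (P : pref) u C D : Prop :=
  hp_rep Sig X P u C D /\
  forall u' C' D', hp_rep Sig X P u' C' D' ->
    C' = C /\ D' = D /\ pos_affine_equiv X u u'.

Definition incomparable (P : pref) (f : S -> V) (x : V) : Prop :=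
  ~ P f (fun _ => x) /\ ~ P (fun _ => x) f.

End Defs.

(* Main.v *)
Require Import Defs.
From HB Require Import structures.
From mathcomp Require Import all_boot all_order all_algebra.
From mathcomp Require Import all_classical all_reals all_analysis.
From mathcomp Require Import ring lra.
Import Order.TTheory GRing.Theory Num.Theory.
Import numFieldNormedType.Exports.
Local Open Scope classical_set_scope.
Local Open Scope ring_scope.

Section Basics.
Context {R : realType} {S : Type} {V : lmodType R}.
Context {Sig : set (set S)}.
Hypothesis hSig : is_algebra Sig.

Lemma Sig0 : Sig set0.
Proof. case: hSig => hT [hC _]; by rewrite -setCT; apply: hC. Qed.

Lemma SigU A B : Sig A -> Sig B -> Sig (A `|` B).
Proof. by case: hSig => _ [_ hU]; apply: hU. Qed.

Lemma SigC A : Sig A -> Sig (~` A).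
Proof. by case: hSig => _ [hC _]; apply: hC. Qed.

Lemma SigI A B : Sig A -> Sig B -> Sig (A `&` B).
Proof.
move=> hA hB; rewrite -[A `&` B]setCK setCI; apply: SigC.
by apply: SigU; apply: SigC.
Qed.

Lemma fa0 (p : set S -> R) : fa_prob Sig p -> p set0 = 0.
Proof.
case=> _ [_ [_ hadd]].
have := hadd set0 set0 Sig0 Sig0 (setI0 _); rewrite setU0 => h.
lra.
Qed.

Lemma fa_ge0 (p : set S -> R) A : fa_prob Sig p -> 0 <= p A.
Proof.
case=> h0 [hge _]; case: (pselect (Sig A)) => hA; first exact: hge.
by rewrite h0.
Qed.

Section Iota.
Variables (T : finType) (iota : S -> T).
Hypothesis hiota : forall t, Sig (iota @^-1` [set t]).

Lemma sig_preim_seq (r : seq T) : Sig (iota @^-1` [set t | t \in r]).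
Proof.
elim: r => [|x r IH].
  rewrite (_ : _ @^-1` _ = set0); first exact: Sig0.
  by apply/seteqP; split=> s //=; rewrite in_nil.
rewrite (_ : _ @^-1` _ = iota @^-1` [set x] `|` iota @^-1` [set t | t \in r]).
  exact: SigU.
apply/seteqP; split=> s /=; rewrite in_cons.
  by case/orP => [/eqP ->|h]; [left|right].
by case=> [->|->]; rewrite ?eqxx ?orbT.
Qed.

Lemma preim_filter (Q : set T) :
  iota @^-1` Q = iota @^-1` [set t | t \in [seq t <- index_enum T | `[< Q t >]]].
Proof.
apply/seteqP; split=> s /=; rewrite mem_filter mem_index_enum andbT.
  by move=> h; apply/asboolP.
by move/asboolP.
Qed.

Lemma sig_preim (Q : set T) : Sig (iota @^-1` Q).
Proof. rewrite preim_filter; exact: sig_preim_seq. Qed.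

Lemma p_preim_seq (p : set S -> R) (r : seq T) : fa_prob Sig p -> uniq r ->
  p (iota @^-1` [set t | t \in r]) = \sum_(t <- r) p (iota @^-1` [set t]).
Proof.
move=> hp; elim: r => [|x r IH] /=.
  move=> _; rewrite big_nil (_ : _ @^-1` _ = set0); first exact: fa0.
  by apply/seteqP; split=> s //=; rewrite in_nil.
case/andP => xr ur; rewrite big_cons -IH //.
rewrite (_ : _ @^-1` _ = iota @^-1` [set x] `|` iota @^-1` [set t | t \in r]).
  case: hp => _ [_ [_ hadd]]; apply: hadd; try exact: sig_preim.
  apply/seteqP; split=> s //= [h1 h2].
  by move: xr; rewrite -h1 h2.
apply/seteqP; split=> s /=; rewrite in_cons.
  by case/orP => [/eqP ->|h]; [left|right].
by case=> [->|->]; rewrite ?eqxx ?orbT.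
Qed.

Lemma p_preim (p : set S -> R) (Q : set T) : fa_prob Sig p ->
  p (iota @^-1` Q) = \sum_(t | `[< Q t >]) p (iota @^-1` [set t]).
Proof.
move=> hp; rewrite preim_filter p_preim_seq //.
  by rewrite big_filter.
by apply: filter_uniq; exact: index_enum_uniq.
Qed.

Lemma p_preimT (p : set S -> R) : fa_prob Sig p ->
  \sum_t p (iota @^-1` [set t]) = 1.
Proof.
move=> hp; have := @p_preim p setT hp; rewrite preimage_setT.
case: (hp) => _ [_ [-> _]] ->.
by apply: eq_bigl => t; rewrite asboolT.
Qed.

Lemma sum_if_seq (W : eqType) (s : seq W) (a : W) (c : R) : uniq s ->
  \sum_(x <- s) (if a == x then c else 0) = if a \in s then c else 0.
Proof.
elim: s => [|x s IH]; first by rewrite big_nil.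
rewrite /= big_cons in_cons => /andP [xs us]; rewrite IH //.
case: eqP => [->|_]; [by rewrite (negbTE xs) addr0 | by rewrite add0r].
Qed.

Lemma expect_iota (u : V -> R) (y : T -> V) (p : set S -> R) : fa_prob Sig p ->
  expect u (fun s => y (iota s)) p = \sum_t u (y t) * p (iota @^-1` [set t]).
Proof.
move=> hp; rewrite /expect fsbig_finite; last first.
  apply: (@sub_finite_set _ _ [set` map y (index_enum T)]); last exact: finite_seq.
  by move=> _ [s _ <-] /=; apply: map_f; exact: mem_index_enum.
set s := finmap.enum_fset _.
have us : uniq s by exact: finmap.fset_uniq.
have hs : forall x, (x \in s) = `[< range (fun s => y (iota s)) x >].
  move=> x; rewrite /s in_fset_set; last first.
    apply: (@sub_finite_set _ _ [set` map y (index_enum T)]); last exact: finite_seq.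
    by move=> _ [s' _ <-] /=; apply: map_f; exact: mem_index_enum.
  by apply/idP/idP => [h|/asboolP h]; [apply/asboolP|]; rewrite inE in h *.
transitivity (\sum_(x <- s) \sum_t (if y t == x then u (y t) * p (iota @^-1` [set t]) else 0)).
  apply: eq_bigr => x _.
  rewrite (_ : (fun s => y (iota s)) @^-1` [set x] = iota @^-1` [set t | y t = x]) //.
  rewrite p_preim // mulr_sumr big_mkcond /=; apply: eq_bigr => t _.
  case: (boolP (y t == x)) => [/eqP e|ne]; first by rewrite (asboolT e) e.
  by rewrite asboolF //; move=> e; move: ne; rewrite e eqxx.
rewrite exchange_big /=; apply: eq_bigr => t _.
rewrite sum_if_seq //; case: ifP => // hn.
have -> : iota @^-1` [set t] = set0.
  apply/seteqP; split=> s0 //= h; move: hn; rewrite hs.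
  case: asboolP => // hr _; apply: hr; exists s0 => //; by rewrite h.
by rewrite fa0 // mulr0.
Qed.

End Iota.

Lemma expect_const (u : V -> R) (x : V) (p : set S -> R) : fa_prob Sig p ->
  expect u (fun _ => x) p = u x.
Proof.
move=> hp.
have hi : forall t : unit, Sig ((fun _ : S => tt) @^-1` [set t]).
  case; rewrite (_ : _ @^-1` _ = setT); first by case: hSig.
  by apply/seteqP; split.
have := @expect_iota unit (fun _ => tt) hi u (fun _ => x) p hp.
move=> /= ->; rewrite (big_pred1 tt) /=; last by case.
rewrite (_ : _ @^-1` _ = setT); last by apply/seteqP; split.
by case: hp => _ [_ [-> _]]; rewrite mulr1.
Qed.


Lemma const_act (X : set V) x : X x -> is_act Sig X (fun _ => x).
Proof.
move=> hx; split=> //; split; first exact: (finite_image_cst x).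
move=> y; case: (pselect (x = y)) => [<-|ne].
  by rewrite (_ : _ @^-1` _ = setT); [case: hSig | apply/seteqP; split].
by rewrite (_ : _ @^-1` _ = set0); [exact: Sig0 | apply/seteqP; split].
Qed.

Lemma expect_comb (u : V -> R) (f : S -> V) (m : nat) (w : 'I_m -> R)
  (ps : 'I_m -> set S -> R) : finite_set (range f) ->
  expect u f (fun A => \sum_(k < m) w k * ps k A) =
  \sum_(k < m) w k * expect u f (ps k).
Proof.
move=> hf; rewrite /expect fsbig_finite //.
under [RHS]eq_bigr do rewrite fsbig_finite //.
under eq_bigr do rewrite mulr_sumr.
rewrite exchange_big /=; apply: eq_bigr => k _.
rewrite mulr_sumr; apply: eq_bigr => x _.
by rewrite mulrCA.
Qed.

Lemma cont_sum (T : topologicalType) (I : Type) (r : seq I) (F : I -> T -> R) :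
  (forall i, continuous (F i)) -> continuous (fun x => \sum_(i <- r) F i x).
Proof.
move=> hF; elim: r => [|a r IH].
  have -> : (fun x => \sum_(i <- [::]) F i x) = (fun=> 0).
    by apply/funext => x; rewrite big_nil.
  exact: cst_continuous.
have -> : (fun x => \sum_(i <- a :: r) F i x) = (fun x => F a x + \sum_(i <- r) F i x).
  by apply/funext => x; rewrite big_cons.
move=> x; apply: continuousD; [exact: hF | exact: IH].
Qed.

Lemma projc (A : set S) : continuous (fun p : {ptws set S -> R} => p A).
Proof. exact: (@proj_continuous _ (fun _ : set S => R) A). Qed.

Lemma expect_cont (u : V -> R) (f : S -> V) : finite_set (range f) ->
  continuous (fun p : {ptws set S -> R} => expect u f p).
Proof.
move=> hf.
have -> : (fun p : {ptws set S -> R} => expect u f p) =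
   (fun p => \sum_(x <- finmap.enum_fset (fset_set (range f))) u x * p (f @^-1` [set x])).
  by apply/funext => p; rewrite /expect fsbig_finite.
apply: cont_sum => x q; apply: continuousM; first exact: cst_continuous.
exact: projc.
Qed.

Lemma exp_min (u : V -> R) (K : set {ptws set S -> R}) (f : S -> V) :
  K !=set0 -> compact K -> finite_set (range f) ->
  exists2 p, K p & forall q, K q -> expect u f p <= expect u f q.
Proof.
move=> h0 hK hf.
have [c cK hc] := compact_EVT_min h0 hK (continuous_subspaceT (expect_cont u f hf)).
exists c; first by rewrite inE in cK.
by move=> q Kq; apply: hc; rewrite inE.
Qed.

Lemma exp_max (u : V -> R) (K : set {ptws set S -> R}) (f : S -> V) :
  K !=set0 -> compact K -> finite_set (range f) ->
  exists2 p, K p & forall q, K q -> expect u f q <= expect u f p.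
Proof.
move=> h0 hK hf.
have [c cK hc] := compact_EVT_max h0 hK (continuous_subspaceT (expect_cont u f hf)).
exists c; first by rewrite inE in cK.
by move=> q Kq; apply: hc; rewrite inE.
Qed.

End Basics.

Lemma inf_min (R : realType) (E : set R) x : E x -> lbound E x -> inf E = x.
Proof.
move=> Ex lb; apply/le_anti/andP; split.
  by apply: ge_inf => //; exists x.
by apply: lb_le_inf => //; exists x.
Qed.

Lemma sup_max (R : realType) (E : set R) x : E x -> ubound E x -> sup E = x.
Proof.
move=> Ex ub; apply/le_anti/andP; split.
  by apply: ge_sup => //; exists x.
by apply: ub_le_sup => //; exists x.
Qed.

Section Reps.
Variables (R : realType) (S : Type) (V : lmodType R).
Context {Sig : set (set S)} (X : set V) (u : V -> R).
Hypothesis hSig : is_algebra Sig.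

Lemma minE_att (C : set (set S -> R)) f : C !=set0 -> wstar_compact C ->
  finite_set (range f) ->
  exists2 p, C p & minE u C f = expect u f p /\ forall q, C q -> expect u f p <= expect u f q.
Proof.
move=> h0 hc hf; have [p Cp hp] := exp_min u C f h0 hc hf.
exists p => //; split => //; apply: inf_min; first by exists p.
by move=> _ [q Cq <-]; exact: hp.
Qed.

Lemma maxE_att (C : set (set S -> R)) f : C !=set0 -> wstar_compact C ->
  finite_set (range f) ->
  exists2 p, C p & maxE u C f = expect u f p /\ forall q, C q -> expect u f q <= expect u f p.
Proof.
move=> h0 hc hf; have [p Cp hp] := exp_max u C f h0 hc hf.
exists p => //; split => //; apply: sup_max; first by exists p.
by move=> _ [q Cq <-]; exact: hp.
Qed.

Lemma minE_const (C : set (set S -> R)) x : C !=set0 -> C `<=` fa_prob Sig ->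
  minE u C (fun _ => x) = u x.
Proof.
move=> [p0 Cp0] hC; apply: inf_min.
  by exists p0 => //; rewrite (expect_const hSig) //; exact: hC.
by move=> _ [q Cq <-]; rewrite (expect_const hSig) //; exact: hC.
Qed.

Lemma maxE_const (C : set (set S -> R)) x : C !=set0 -> C `<=` fa_prob Sig ->
  maxE u C (fun _ => x) = u x.
Proof.
move=> [p0 Cp0] hC; apply: sup_max.
  by exists p0 => //; rewrite (expect_const hSig) //; exact: hC.
by move=> _ [q Cq <-]; rewrite (expect_const hSig) //; exact: hC.
Qed.

Definition rep0 (P : pref S V) (C : set (set S -> R)) :=
  hp_rep Sig X P u C C \/ bewley_rep Sig X P u C.

Lemma rep0_prior P C : rep0 P C -> [/\ C `<=` fa_prob Sig, C !=set0,
  convex_meas C & wstar_compact C].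
Proof.
case=> [[_ [[h1 [h2 h3]] [_ [[p [Cp _]] _]]]]|[_ [[h1 [h2 h3]] [h0 _]]]]; split => //.
by exists p.
Qed.

Lemma rep0_gt P C f x : rep0 P C -> is_act Sig X f -> X x ->
  (P f (fun _ => x) <-> forall p, C p -> expect u f p > u x).
Proof.
move=> hr hf hx; have [hfa hne _ hcp] := rep0_prior _ _ hr.
have hcx := const_act hSig X x hx.
case: hr => [[_ [_ [_ [_ hiff]]]]|[_ [_ [_ hiff]]]]; rewrite hiff //; last first.
  by split=> h p Cp; move: (h p Cp); rewrite (expect_const hSig) //; exact: hfa.
rewrite minE_const // maxE_const //.
have [p1 Cp1 [e1 h1]] := minE_att _ f hne hcp (proj1 (proj2 hf)).
have [p2 Cp2 [e2 h2]] := maxE_att _ f hne hcp (proj1 (proj2 hf)).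
rewrite e1 e2; split.
  by case=> hlt _ q Cq; apply: (lt_le_trans hlt); exact: h1.
move=> h; split; first exact: h.
by apply: (lt_le_trans (h _ Cp1)); exact: h2.
Qed.

Lemma rep0_lt P C f x : rep0 P C -> is_act Sig X f -> X x ->
  (P (fun _ => x) f <-> forall p, C p -> expect u f p < u x).
Proof.
move=> hr hf hx; have [hfa hne _ hcp] := rep0_prior _ _ hr.
have hcx := const_act hSig X x hx.
case: hr => [[_ [_ [_ [_ hiff]]]]|[_ [_ [_ hiff]]]]; rewrite hiff //; last first.
  by split=> h p Cp; move: (h p Cp); rewrite (expect_const hSig) //; exact: hfa.
rewrite minE_const // maxE_const //.
have [p1 Cp1 [e1 h1]] := minE_att _ f hne hcp (proj1 (proj2 hf)).
have [p2 Cp2 [e2 h2]] := maxE_att _ f hne hcp (proj1 (proj2 hf)).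
rewrite e1 e2; split.
  by case=> _ hlt q Cq; apply: (le_lt_trans _ hlt); exact: h2.
move=> h; split; last exact: h.
by apply: (le_lt_trans _ (h _ Cp2)); exact: h1.
Qed.

Lemma rep0_gen P C f g : rep0 P C -> is_act Sig X f -> is_act Sig X g ->
  (forall p, C p -> expect u f p > expect u g p) -> P f g.
Proof.
move=> hr hf hg h; have [hfa hne _ hcp] := rep0_prior _ _ hr.
case: hr => [[_ [_ [_ [_ hiff]]]]|[_ [_ [_ hiff]]]]; rewrite hiff //.
have [p1 Cp1 [e1 h1]] := minE_att _ f hne hcp (proj1 (proj2 hf)).
have [p2 Cp2 [e2 h2]] := maxE_att _ f hne hcp (proj1 (proj2 hf)).
have [p3 Cp3 [e3 h3]] := minE_att _ g hne hcp (proj1 (proj2 hg)).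
have [p4 Cp4 [e4 h4]] := maxE_att _ g hne hcp (proj1 (proj2 hg)).
rewrite e1 e2 e3 e4; split.
  by apply: (le_lt_trans (h3 _ Cp1)); exact: h.
by apply: (lt_le_trans (h _ Cp4)); exact: h2.
Qed.

End Reps.

HB.instance Definition ptws_pointed (I : Type) (R : realType) :=
  isPointed.Build (prod_topology (fun _ : I => R)) (fun _ => 0).

Section Sep.
Context {R : realType} {S : Type} {V : lmodType R} {Sig : set (set S)}.
Variables (X : set V) (u : V -> R) (x1 x2 : V).
Hypotheses (hSig : is_algebra Sig) (hX : convex_X X) (hu : affine_on X u)
  (hx1 : X x1) (hx2 : X x2) (hlt : u x1 < u x2).

Definition mix (t : R) := t *: x2 + (1 - t) *: x1.

Lemma mixX t : 0 <= t <= 1 -> X (mix t).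
Proof. by move=> ht; apply: hX. Qed.

Lemma u_mix t : 0 <= t <= 1 -> u (mix t) = u x1 + (u x2 - u x1) * t.
Proof. by move=> ht; rewrite /mix hu //; ring. Qed.

Definition sigadj (A : set S) := if `[< Sig A >] then A else set0.

Lemma Sig_adj A : Sig (sigadj A).
Proof. rewrite /sigadj; case: asboolP => // _; exact: Sig0 hSig. Qed.

Lemma p_adj (p : set S -> R) A : fa_prob Sig p -> p (sigadj A) = p A.
Proof.
move=> hp; rewrite /sigadj; case: asboolP => // nA.
by rewrite (fa0 hSig) //; case: hp => h0 _; rewrite h0.
Qed.

Lemma mem_bigI (I : eqType) (r : seq I) (F : I -> set S) s :
  (\big[setI/setT]_(i <- r) F i) s <-> forall i, i \in r -> F i s.
Proof.
elim: r => [|a r IH]; rewrite ?big_nil ?big_cons.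
  by split => // _ i; rewrite in_nil.
split.
  case=> Fa Hr i; rewrite in_cons => /orP [/eqP -> // | ir].
  exact: (proj1 IH Hr i ir).
move=> H; split; first by apply: H; rewrite in_cons eqxx.
by apply/IH => i ir; apply: H; rewrite in_cons ir orbT.
Qed.

Lemma Sig_bigI (I : Type) (r : seq I) (F : I -> set S) :
  (forall i, Sig (F i)) -> Sig (\big[setI/setT]_(i <- r) F i).
Proof.
move=> hF; apply: (big_ind Sig) => //; first by case: hSig.
exact: (SigI hSig).
Qed.

Lemma sep (K : set (set S -> R)) (q : set S -> R) :
  wstar_compact K -> convex_meas K -> K `<=` fa_prob Sig -> fa_prob Sig q -> ~ K q ->
  exists h, [/\ is_act Sig X h, (forall p, K p -> expect u h q < expect u h p) &
    (forall p, fa_prob Sig p -> exists2 x, X x & u x = expect u h p)].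
Proof.
move=> hK hconv hKfa hq nKq.
case: (pselect (K !=set0)) => [hne|hne]; last first.
  exists (fun _ => x1); split.
  - exact: const_act.
  - by move=> p Kp; exfalso; apply: hne; exists p.
  - by move=> p hp; exists x1 => //; rewrite (expect_const hSig).
pose F (A : set S) := [set p : {ptws set S -> R} | p A <> q A].
have hFo : forall A, setT A -> open (F A).
  move=> A _.
  rewrite (_ : F A = (fun p : {ptws set S -> R} => p A) @^-1` (~` [set q A])) //.
  apply: open_comp; first by move=> p _; exact: projc.
  by rewrite openC; exact: closed_eq.
have hcov : K `<=` cover [set: set S] F.
  move=> p Kp; have [A hA] : exists A, p A <> q A.
    apply/existsNP => h; apply: nKq; suff <- : p = q by [].
    by apply/funext => A; exact: h.
  by exists A.
move: (hK); rewrite /wstar_compact compact_cover => /(_ _ _ _ hFo hcov) [D' _ hD'].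
pose r := finmap.enum_fset D'.
pose k := size r.
pose B (j : 'I_k) := sigadj (nth set0 r j).
have hsep : forall p, K p -> exists j : 'I_k, p (B j) <> q (B j).
  move=> p Kp; have [A DA hA] := hD' p Kp.
  have Ar : A \in r by [].
  have hi : (index A r < k)%N by rewrite index_mem.
  exists (Ordinal hi); rewrite /B /= nth_index // !p_adj //; exact: hKfa.
pose g (p : {ptws set S -> R}) :=
  \sum_(j < k) (p (B j) - q (B j)) * (p (B j) - q (B j)).
have gc : continuous g.
  apply: cont_sum => j p.
  have hj : {for p, continuous (fun x : {ptws set S -> R} => x (B j) - q (B j))}.
    apply: (@continuousB _ _ _ (fun x : {ptws set S -> R} => x (B j)) (fun=> q (B j)));
    [exact: projc | exact: cst_continuous].
  exact: (@continuousM _ _ _ _ p hj hj).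
have [ps Kps hmin] := @compact_EVT_min {ptws set S -> R} R g K hne hK (continuous_subspaceT gc).
rewrite inE in Kps.
have gpos : 0 < g ps.
  have [j0 hj0] := hsep ps Kps.
  rewrite /g (bigD1 j0) //=.
  have h1 : 0 < (ps (B j0) - q (B j0)) * (ps (B j0) - q (B j0)).
    by rewrite -expr2 exprn_even_gt0 //= subr_eq0; apply/eqP.
  have h2 : 0 <= \sum_(i < k | i != j0) (ps (B i) - q (B i)) * (ps (B i) - q (B i)).
    by apply: sumr_ge0 => i _; rewrite -expr2 sqr_ge0.
  lra.
pose c (j : 'I_k) := ps (B j) - q (B j).
pose L (p : set S -> R) := \sum_(j < k) c j * p (B j).
have hLq : L q < L ps.
  have : L ps - L q = g ps.
    by rewrite /L /g -sumrB; apply: eq_bigr => j _; rewrite /c; ring.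
  lra.
have hL : forall p, K p -> L ps <= L p.
  move=> p Kp.
  pose d (j : 'I_k) := p (B j) - ps (B j).
  pose s := \sum_(j < k) c j * d j.
  pose Dd := \sum_(j < k) d j * d j.
  have es : L p - L ps = s.
    by rewrite /L /s -sumrB; apply: eq_bigr => j _; rewrite /d; ring.
  have hD : 0 <= Dd by apply: sumr_ge0 => j _; rewrite -expr2 sqr_ge0.
  have key : forall t, 0 < t <= 1 -> 0 <= 2 * s + t * Dd.
    move=> t /andP [t0 t1].
    pose pt := fun A => t * p A + (1 - t) * ps A.
    have Kpt : K pt by apply: hconv => //; rewrite ltW.
    have := hmin pt (mem_set Kpt).
    have -> : g pt = g ps + t * (2 * s + t * Dd).
      rewrite /g /s /Dd mulrDr mulrA mulrA !mulr_sumr -!big_split /=.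
      by apply: eq_bigr => j _; rewrite /pt /c /d; ring.
    move=> h; have : 0 <= t * (2 * s + t * Dd) by lra.
    by rewrite pmulr_rge0.
  have : 0 <= s.
    rewrite leNgt; apply/negP => sneg.
    pose t := - s / (Dd - s).
    have hDs : 0 < Dd - s by lra.
    have ht : t * (Dd - s) = - s by rewrite /t divfK // gt_eqF.
    have t0 : 0 < t by rewrite /t divr_gt0 // oppr_gt0.
    have t1 : t <= 1 by rewrite /t ler_pdivrMr // mul1r; lra.
    have := key t; rewrite t0 t1 => /(_ isT) hk.
    nra.
  lra.
pose T := {ffun 'I_k -> bool}.
pose iota (s : S) : T := [ffun j => `[< B j s >]].
have hiota : forall t : T, Sig (iota @^-1` [set t]).
  move=> t.
  rewrite (_ : _ @^-1` _ = \big[setI/setT]_(j <- index_enum 'I_k)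
                              (if t j then B j else ~` B j)).
    apply: Sig_bigI => j; case: (t j); first exact: Sig_adj.
    by apply: (SigC hSig); exact: Sig_adj.
  apply/seteqP; split => s /=.
    move=> <-; apply/mem_bigI => j _; rewrite ffunE.
    by case: asboolP.
  move/mem_bigI => h; apply/ffunP => j; rewrite ffunE.
  have := h j (mem_index_enum j).
  by case: (t j) => /= hh; [rewrite asboolT | rewrite asboolF].
have hB : forall (p : set S -> R) (j : 'I_k), fa_prob Sig p ->
    p (B j) = \sum_(t : T | t j) p (iota @^-1` [set t]).
  move=> p j hp; rewrite (_ : B j = iota @^-1` [set t : T | t j]); last first.
    apply/seteqP; split => s /=; rewrite ffunE.
      by move=> h; apply/asboolP.
    by move/asboolP.
  rewrite (p_preim hSig _ _ hiota p _ hp); apply: eq_bigl => t.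
  exact: asboolb.
pose dd (t : T) := \sum_(j < k | t j) c j.
have hLd : forall p : set S -> R, fa_prob Sig p ->
    L p = \sum_(t : T) dd t * p (iota @^-1` [set t]).
  move=> p hp; rewrite /L.
  under eq_bigr do rewrite (hB p _ hp) mulr_sumr big_mkcond /=.
  rewrite exchange_big /=; apply: eq_bigr => t _.
  by rewrite /dd mulr_suml [RHS]big_mkcond.
pose M := \sum_(j < k) `|c j| + 1.
have M0 : 0 < M.
  have : 0 <= \sum_(j < k) `|c j| by apply: sumr_ge0 => j _.
  rewrite /M; lra.
have hdd : forall t, - M <= dd t <= M.
  move=> t; rewrite -ler_norml.
  apply: le_trans (ler_norm_sum _ _ _) _.
  apply: (@le_trans _ _ (\sum_(j < k) `|c j|)); last by rewrite /M; lra.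
  rewrite [X in _ <= X](bigID (fun j => t j)) /=.
  have : 0 <= \sum_(j < k | ~~ t j) `|c j| by apply: sumr_ge0 => j _.
  lra.
pose tau (t : T) := (dd t + M) / (2 * M).
have htau : forall t, 0 <= tau t <= 1.
  move=> t; have := hdd t => /andP [h1 h2].
  apply/andP; split; first by rewrite /tau divr_ge0 //; lra.
  by rewrite /tau ler_pdivrMr ?mul1r; lra.
pose y (t : T) := mix (tau t).
pose h (s : S) := y (iota s).
pose Z (p : set S -> R) := \sum_(t : T) tau t * p (iota @^-1` [set t]).
have hE : forall p, fa_prob Sig p -> expect u h p = u x1 + (u x2 - u x1) * Z p.
  move=> p hp; rewrite (expect_iota hSig _ _ hiota u y p hp).
  have hs1 := p_preimT hSig _ _ hiota p hp.
  transitivity (u x1 * \sum_(t : T) p (iota @^-1` [set t]) + (u x2 - u x1) * Z p);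
    last by rewrite hs1 mulr1.
  rewrite /Z !mulr_sumr -big_split; apply: eq_bigr => t _.
  rewrite /= /y (u_mix _ (htau t)); ring.
have hZ : forall p, fa_prob Sig p -> Z p * (2 * M) = L p + M.
  move=> p hp; have hs1 := p_preimT hSig _ _ hiota p hp.
  rewrite hLd // /Z mulr_suml.
  transitivity (\sum_(t : T) (dd t * p (iota @^-1` [set t]) + M * p (iota @^-1` [set t]))).
    apply: eq_bigr => t _; rewrite /tau; field.
    by rewrite gt_eqF.
  by rewrite big_split /= -mulr_sumr hs1 mulr1.
have hZ01 : forall p, fa_prob Sig p -> 0 <= Z p <= 1.
  move=> p hp; have hs1 := p_preimT hSig _ _ hiota p hp.
  apply/andP; split.
    apply: sumr_ge0 => t _; apply: mulr_ge0; first by case/andP: (htau t).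
    exact: (fa_ge0 _ _ hp).
  rewrite -hs1; apply: ler_sum => t _.
  apply: ler_piMl; first exact: (fa_ge0 _ _ hp).
  by case/andP: (htau t).
exists h; split.
- split; first by move=> s; apply: mixX.
  split.
    apply: (@sub_finite_set _ _ [set` map y (index_enum T)]); last exact: finite_seq.
    by move=> _ [s _ <-] /=; apply: map_f; exact: mem_index_enum.
  move=> x; rewrite (_ : h @^-1` [set x] = iota @^-1` [set t | y t = x]) //.
  exact: sig_preim.
- move=> p Kp; have hp := hKfa p Kp; rewrite !hE //.
  have hM2 : 0 < 2 * M by lra.
  have hzz : Z q < Z p.
    by rewrite -(ltr_pM2r hM2) !hZ //; have := hL p Kp; lra.
  have hab : 0 < u x2 - u x1 by rewrite subr_gt0; exact: hlt.
  have : (u x2 - u x1) * Z q < (u x2 - u x1) * Z p by rewrite ltr_pM2l.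
  lra.
- move=> p hp; exists (mix (Z p)); first exact: (mixX _ (hZ01 p hp)).
  by rewrite (u_mix _ (hZ01 p hp)) hE.
Qed.

End Sep.

Lemma ptws_cont (R : realType) (T : topologicalType) (I : Type) (g : T -> {ptws I -> R}) :
  (forall i, continuous (fun x => g x i)) -> continuous g.
Proof.
move=> hg x.
apply/cvg_sup => i.
have hs : range (fun h : I -> R => h i) = setT.
  by apply/seteqP; split => // y _; exists (fun _ => y).
apply/(cvg_image _ _ hs) => B hB.
exists ((fun h : I -> R => h i) @^-1` B).
  exact: (hg i x B hB).
exact: image_preimage.
Qed.

Lemma fst_cont (T U : topologicalType) : continuous (@fst T U).
Proof. by move=> [x y]; exact: cvg_fst. Qed.

Lemma snd_cont (T U : topologicalType) : continuous (@snd T U).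
Proof. by move=> [x y]; exact: cvg_snd. Qed.

Section Hull.
Context {R : realType} {S : Type} {Sig : set (set S)}.
Variables (n : nat) (C : 'I_n -> set (set S -> R)).

Definition W := prod_topology (fun _ : 'I_n => (R * {ptws set S -> R})%type).

Definition Aset (i : 'I_n) : set (R * {ptws set S -> R}) :=
  `[0, 1]%classic `*` (C i : set {ptws set S -> R}).

Definition Dset : set W :=
  [set f : W | forall i, Aset i (f i)] `&` [set f : W | \sum_(i < n) (f i).1 = 1].

Definition Phi (f : W) : {ptws set S -> R} := fun A => \sum_(i < n) (f i).1 * (f i).2 A.

Definition Khull : set (set S -> R) := Phi @` Dset.

Lemma coord_cont (i : 'I_n) : continuous (fun f : W => f i).
Proof. exact: (@proj_continuous _ (fun _ : 'I_n => (R * {ptws set S -> R})%type) i). Qed.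

Lemma coord1_cont (i : 'I_n) : continuous (fun f : W => (f i).1).
Proof.
move=> f; apply: (@continuous_comp _ _ _ (fun f : W => f i) fst).
  exact: coord_cont.
exact: fst_cont.
Qed.

Lemma coord2_cont (i : 'I_n) (A : set S) : continuous (fun f : W => (f i).2 A).
Proof.
move=> f; apply: (@continuous_comp _ _ _ (fun f : W => (f i).2) (fun p : {ptws set S -> R} => p A)).
  move=> g; apply: (@continuous_comp _ _ _ (fun f : W => f i) snd).
    exact: coord_cont.
  exact: snd_cont.
exact: projc.
Qed.

Lemma Phi_cont : continuous Phi.
Proof.
apply: (@ptws_cont R W (set S) Phi) => A.
apply: cont_sum => i g.
exact: (@continuousM _ _ _ _ g (coord1_cont i g) (coord2_cont i A g)).
Qed.

Hypothesis hC : forall i, wstar_compact (C i).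

Lemma Dset_compact : compact Dset.
Proof.
apply: compact_closedI.
  have := @tychonoff 'I_n (fun _ : 'I_n => (R * {ptws set S -> R})%type) Aset.
  apply => i; apply: compact_setX; [exact: segment_compact | exact: hC].
rewrite (_ : [set f : W | _] = (fun f : W => \sum_(i < n) (f i).1) @^-1` [set 1]) //.
apply: closed_comp; last exact: closed_eq.
move=> g _; apply: cont_sum => i; exact: coord1_cont.
Qed.

Lemma Khull_compact : wstar_compact Khull.
Proof.
apply: continuous_compact; last exact: Dset_compact.
apply: continuous_subspaceT; exact: Phi_cont.
Qed.

End Hull.

Section HullAlg.
Context {R : realType} {S : Type} {Sig : set (set S)}.
Variables (n : nat) (C : 'I_n -> set (set S -> R)).

Lemma comb_fa m (w : 'I_m -> R) (ps : 'I_m -> set S -> R) :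
  (forall k, 0 <= w k) -> \sum_(k < m) w k = 1 -> (forall k, fa_prob Sig (ps k)) ->
  fa_prob Sig (fun A => \sum_(k < m) w k * ps k A).
Proof.
move=> w0 w1 hps; split; [|split; [|split]].
- move=> A nA; apply: big1 => k _; case: (hps k) => h0 _; by rewrite h0 // mulr0.
- move=> A hA; apply: sumr_ge0 => k _; apply: mulr_ge0 => //; exact: (fa_ge0 _ _ (hps k)).
- rewrite -w1; apply: eq_bigr => k _; case: (hps k) => _ [_ [-> _]]; by rewrite mulr1.
- move=> A B hA hB hAB; rewrite -big_split /=; apply: eq_bigr => k _.
  by case: (hps k) => _ [_ [_ ->]] //; rewrite mulrDr.
Qed.

Lemma Dset_mem (f : W n) : Dset n C f ->
  (forall i, (0 <= (f i).1 <= 1) /\ C i (f i).2) /\ \sum_(i < n) (f i).1 = 1.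
Proof.
case=> hA hs; split => // i; have [h1 h2] := hA i; split => //.
Qed.

Lemma Khull_fa : (forall i, C i `<=` fa_prob Sig) -> Khull n C `<=` fa_prob Sig.
Proof.
move=> hC _ [f /Dset_mem [hA hs] <-].
apply: comb_fa => //; first by move=> i; case/andP: (proj1 (hA i)).
by move=> i; apply: hC; exact: (proj2 (hA i)).
Qed.

Lemma Khull_sub_co : Khull n C `<=` co (\bigcup_(i in setT) C i).
Proof.
move=> _ [f /Dset_mem [hA hs] <-].
exists n, (fun i => (f i).1), (fun i => (f i).2); split.
  by move=> i; case/andP: (proj1 (hA i)).
split => //; split => // i; exists i => //; exact: (proj2 (hA i)).
Qed.

Lemma C_sub_Khull : (forall j, C j !=set0) -> forall i, C i `<=` Khull n C.
Proof.
move=> hne i p Cp.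
have [e he] := choice hne.
exists (fun j => if j == i then ((1 : R), (p : {ptws set S -> R})) else (0, (e j : {ptws set S -> R}))).
  split.
    move=> j; case: eqP => [->|_] /=; split => //=; rewrite in_itv /= ?lexx ?ler01 //.
  by rewrite /= (bigD1 i) //= eqxx big1 ?addr0 // => j /negbTE ->.
apply/funext => A; rewrite /Phi (bigD1 i) //= eqxx big1 ?mul1r ?addr0 //.
by move=> j /negbTE -> /=; rewrite mul0r.
Qed.

Lemma Khull_convex : (forall i, convex_meas (C i)) -> convex_meas (Khull n C).
Proof.
move=> hconv _ _ a [f /Dset_mem [hfA hfs] <-] [g /Dset_mem [hgA hgs] <-] /andP [a0 a1].
pose w i := a * (f i).1 + (1 - a) * (g i).1.
pose r i : {ptws set S -> R} := if 0 < w i then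
  (fun A => (a * (f i).1 / w i) * (f i).2 A + (1 - a * (f i).1 / w i) * (g i).2 A)
  else (f i).2.
have hw : forall i, 0 <= w i <= 1.
  move=> i; have /andP [f0 f1] := proj1 (hfA i); have /andP [g0 g1] := proj1 (hgA i).
  apply/andP; split; rewrite /w; nra.
exists (fun i => (w i, r i)).
  split.
    move=> i; split; first by rewrite /= in_itv /=; exact: hw.
    rewrite /= /r; case: ifP => hw0; last exact: (proj2 (hfA i)).
    have /andP [f0 f1] := proj1 (hfA i); have /andP [g0 g1] := proj1 (hgA i).
    apply: hconv; [exact: (proj2 (hfA i)) | exact: (proj2 (hgA i)) |].
    apply/andP; split; first by apply: divr_ge0; [exact: (mulr_ge0 a0 f0) | case/andP: (hw i)].
    rewrite ler_pdivrMr // mul1r /w; nra.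
  rewrite /= /w big_split /= -!mulr_sumr hfs hgs; ring.
apply/funext => A; rewrite /Phi !mulr_sumr -big_split; apply: eq_bigr => i _ /=.
rewrite /r; case: ifP => hw0.
  by rewrite /w; field; rewrite gt_eqF.
have /andP [f0 f1] := proj1 (hfA i); have /andP [g0 g1] := proj1 (hgA i).
have /andP [w0 w1] := hw i.
have e0 : w i = 0 by apply/eqP; rewrite eq_le w0 andbT leNgt hw0.
have e1 : a * (f i).1 = 0 by move: e0; rewrite /w; nra.
have e2 : (1 - a) * (g i).1 = 0 by move: e0; rewrite /w; nra.
by rewrite e0 mul0r !mulrA e1 e2 !mul0r addr0.
Qed.

End HullAlg.

Lemma pos_comb (R : realType) m (w : 'I_m -> R) (a b : 'I_m -> R) :
  (forall k, 0 <= w k) -> \sum_(k < m) w k = 1 -> (forall k, a k < b k) ->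
  \sum_(k < m) w k * a k < \sum_(k < m) w k * b k.
Proof.
move=> w0 w1 hab.
have [k wk] : exists k, 0 < w k.
  apply: contrapT => hn.
  have : \sum_(k < m) w k = 0.
    apply: big1 => k _; apply/eqP; rewrite eq_le w0 andbT leNgt.
    by apply/negP => h; apply: hn; exists k.
  by rewrite w1 => /eqP; rewrite oner_eq0.
rewrite -subr_gt0 -sumrB (bigD1 k) //=.
have h1 : 0 < w k * b k - w k * a k by rewrite -mulrBr mulr_gt0 // subr_gt0.
have h2 : 0 <= \sum_(i < m | i != k) (w i * b i - w i * a i).
  apply: sumr_ge0 => i _; rewrite -mulrBr mulr_ge0 // subr_ge0; exact: ltW.
lra.
Qed.

Lemma avg_le (R : realType) m (w : 'I_m -> R) (a : 'I_m -> R) :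
  (forall k, 0 <= w k) -> \sum_(k < m) w k = 1 ->
  exists k, a k <= \sum_(k < m) w k * a k.
Proof.
move=> w0 w1; apply: contrapT => hn.
have h : forall k, \sum_(k < m) w k * a k < a k.
  move=> k; rewrite ltNge; apply/negP => h; apply: hn; exists k.
  exact: h.
have := @pos_comb R m w (fun=> \sum_(k < m) w k * a k) a w0 w1 h.
by rewrite -mulr_suml w1 mul1r ltxx.
Qed.

Lemma C_sub_co (R : realType) (S : Type) n (C : 'I_n -> set (set S -> R)) i :
  C i `<=` co (\bigcup_(j in setT) C j).
Proof.
move=> p Cp; exists 1%N, (fun=> 1), (fun=> p); split => //.
split; first by rewrite big_ord1.
split; first by move=> k; exists i.
by apply/funext => A; rewrite big_ord1 mul1r.
Qed.

Theorem proposition3 (R : realType) (S : Type) (V : lmodType R)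
  (Sig : set (set S)) (X : set V) (n : nat) (u : V -> R)
  (Pi : 'I_n -> pref S V) (C : 'I_n -> set (set S -> R))
  (P0 : pref S V) (C0 : set (set S -> R)) :
  is_algebra Sig -> convex_X X -> non_singleton X ->
  affine_on X u -> nonconstant_on X u ->
  (forall i, unique_bewley Sig X (Pi i) u (C i)) ->
  (unique_hp Sig X P0 u C0 C0 \/ unique_bewley Sig X P0 u C0) ->
  let coU := co (\bigcup_(i in setT) C i) in
  let pareto := forall f g, is_act Sig X f -> is_act Sig X g ->
      (forall i, Pi i f g) -> P0 f g in
  let caution := forall f x, is_act Sig X f -> X x ->
      (exists i, incomparable (Pi i) f x) -> incomparable P0 f x in
  (pareto <-> C0 `<=` coU) /\
  (caution <-> coU `<=` C0) /\
  (pareto -> caution -> C0 = coU).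
Proof.
move=> hSig hX hXns hu hnc hPi hP0 coU pareto caution.
have [x1 [x2 [hx1 [hx2 hlt]]]] : exists x1 x2, X x1 /\ X x2 /\ u x1 < u x2.
  case: hnc => x [y [hx [hy hne]]].
  case: (ltrgtP (u x) (u y)) => h.
  - by exists x, y.
  - by exists y, x.
  - by exfalso.
have hR : forall i, @rep0 R S V Sig X u (Pi i) (C i).
  by move=> i; right; exact: (proj1 (hPi i)).
have hR0 : @rep0 R S V Sig X u P0 C0.
  by case: hP0 => [[h _]|[h _]]; [left|right].
have hCi := fun i => rep0_prior _ _ _ _ _ _ _ (hR i).
have [hC0fa hC0ne hC0cv hC0cp] := rep0_prior _ _ _ _ _ _ _ hR0.
have hCfa : forall i, C i `<=` fa_prob Sig by move=> i; case: (hCi i).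
have hCne : forall i, C i !=set0 by move=> i; case: (hCi i).
have hCcv : forall i, convex_meas (C i) by move=> i; case: (hCi i).
have hCcp : forall i, wstar_compact (C i) by move=> i; case: (hCi i).
have hcoU : forall q, coU q -> exists m (w : 'I_m -> R) (ps : 'I_m -> set S -> R) (ix : 'I_m -> 'I_n),
    [/\ forall k, 0 <= w k, \sum_(k < m) w k = 1, forall k, C (ix k) (ps k) &
        q = fun A => \sum_(k < m) w k * ps k A].
  move=> q [m [w [ps [w0 [w1 [hps ->]]]]]].
  have /choice [ix hix] : forall k, exists i, C i (ps k).
    by move=> k; have [i _ hi] := hps k; exists i.
  by exists m, w, ps, ix; split.
have hcofa : forall q, coU q -> fa_prob Sig q.
  move=> q /hcoU [m [w [ps [ix [w0 w1 hps ->]]]]].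
  by apply: comb_fa => // k; apply: (hCfa (ix k)); exact: hps.
have hCco : forall i, C i `<=` coU by move=> i; exact: C_sub_co.
have part1 : pareto <-> C0 `<=` coU.
  split.
  - move=> hpar q C0q; apply: contrapT => nq.
    have nK : ~ Khull n C q by move=> hk; apply: nq; exact: Khull_sub_co.
    have [h [hact hlt' hx]] := sep X u x1 x2 hSig hX hu hx1 hx2 hlt _ _
      (Khull_compact _ _ hCcp) (Khull_convex _ _ hCcv) (Khull_fa _ _ hCfa) (hC0fa q C0q) nK.
    have [x Xx ex] := hx q (hC0fa q C0q).
    have hall : forall i, Pi i h (fun _ => x).
      move=> i; apply/(rep0_gt _ _ _ _ _ hSig _ _ _ _ (hR i) hact Xx) => p Cp.
      rewrite ex; apply: hlt'; exact: (C_sub_Khull _ _ hCne _ _ Cp).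
    have := hpar h (fun _ => x) hact (const_act hSig X x Xx) hall.
    move/(rep0_gt _ _ _ _ _ hSig _ _ _ _ hR0 hact Xx)/(_ q C0q).
    by rewrite ex ltxx.
  - move=> hsub f g hf hg hall; apply: (rep0_gen _ _ _ _ _ _ _ _ _ hR0 hf hg) => p C0p.
    have [m [w [ps [ix [w0 w1 hps ep]]]]] := hcoU p (hsub p C0p).
    rewrite ep !expect_comb; try exact: (proj1 (proj2 hf)); try exact: (proj1 (proj2 hg)).
    apply: pos_comb => // k.
    have := hall (ix k); case: (proj1 (hPi (ix k))) => _ [_ [_ hiff]].
    by rewrite hiff // => /(_ _ (hps k)).
have part2 : caution <-> coU `<=` C0.
  split.
  - move=> hcau q coq; apply: contrapT => nq.
    have hq := hcofa q coq.
    have [h [hact hlt' hx]] := sep X u x1 x2 hSig hX hu hx1 hx2 hlt _ _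
      hC0cp hC0cv hC0fa hq nq.
    have [m [w [ps [ix [w0 w1 hps ep]]]]] := hcoU q coq.
    have [k hk] := @avg_le R m w (fun k => expect u h (ps k)) w0 w1.
    have hpk := hCfa (ix k) (ps k) (hps k).
    have [x' Xx' ex'] := hx (ps k) hpk.
    have hinc : incomparable (Pi (ix k)) h x'.
      split.
      + move/(rep0_gt _ _ _ _ _ hSig _ _ _ _ (hR (ix k)) hact Xx')/(_ _ (hps k)).
        by rewrite ex' ltxx.
      + move/(rep0_lt _ _ _ _ _ hSig _ _ _ _ (hR (ix k)) hact Xx')/(_ _ (hps k)).
        by rewrite ex' ltxx.
    have [hn _] := hcau h x' hact Xx' (ex_intro _ (ix k) hinc).
    apply: hn; apply/(rep0_gt _ _ _ _ _ hSig _ _ _ _ hR0 hact Xx') => p C0p.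
    rewrite ex'; apply: le_lt_trans hk _.
    move: (hlt' p C0p); rewrite ep expect_comb //; exact: (proj1 (proj2 hact)).
  - move=> hsub f x hf Xx [i [hn1 hn2]]; split.
    + move/(rep0_gt _ _ _ _ _ hSig _ _ _ _ hR0 hf Xx) => h; apply: hn1.
      apply/(rep0_gt _ _ _ _ _ hSig _ _ _ _ (hR i) hf Xx) => p Cp; apply: h; apply: hsub; exact: (hCco i p Cp).
    + move/(rep0_lt _ _ _ _ _ hSig _ _ _ _ hR0 hf Xx) => h; apply: hn2.
      apply/(rep0_lt _ _ _ _ _ hSig _ _ _ _ (hR i) hf Xx) => p Cp; apply: h; apply: hsub; exact: (hCco i p Cp).
split => //; split => //.
move=> hpar hcau; apply/seteqP; split; [exact/part1 | exact/part2].
Qed.
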